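(* Let $\Omega\subsetneq\mathbb{S}^m$ be a domain and $\rho\in C^1(\Omega)$ such that the metric $g=e^{2\rho}g_0$ is a complete Riemannian metric on $\Omega$ and $\sigma=e^{-\rho}$ is the restriction to $\Omega$ of a continuous function defined on $\overline{\Omega}$. Then the associated map $\phi:\Omega\to\mathbb{H}^{m+1}$ is proper.
   Context: $\mathbb{S}^m\subset\mathbb{R}^{m+1}$ is the unit sphere with round metric $g_0$; $\nabla$ and $|\cdot|$ denote gradient and norm with respect to $g_0$. Let $\mathbb{L}^{m+2}$ be $\mathbb{R}^{m+2}$ with $\langle\!\langle x,y\rangle\!\rangle=-x_0y_0+\sum_{i=1}^{m+1}x_iy_i$, and $\mathbb{H}^{m+1}=\{x:\langle\!\langle x,x\rangle\!\rangle=-1,\ x_0>0\}$. For $\rho\in C^1(\Omega)$ the associated map $\phi=\phi^\rho:\Omega\to\mathbb{H}^{m+1}$ is $$\phi(x)=\frac{e^{\rho(x)}}{2}\Big(1+e^{-2\rho(x)}\big(1+|\nabla\rho(x)|^2\big)\Big)(1,x)+e^{-\rho(x)}\big(0,-x+\nabla\rho(x)\big).$$ Proper means preimages of compact sets are compact. *)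

(* Defs.v *)
From Stdlib Require Import Reals List.
Open Scope R_scope.

(* Vectors of R^n are represented as functions nat -> R whose
   coordinates of index >= n vanish (predicate [inE n]). *)
Definition vec := nat -> R.

Definition inE (n : nat) (v : vec) : Prop := forall i, (n <= i)%nat -> v i = 0.

Fixpoint sumR (n : nat) (f : nat -> R) : R :=
  match n with O => 0 | S k => sumR k f + f k end.

Definition dot (n : nat) (u v : vec) : R := sumR n (fun i => u i * v i).
Definition vnorm (n : nat) (v : vec) : R := sqrt (dot n v v).
Definition edist (n : nat) (u v : vec) : R := vnorm n (fun i => u i - v i).

Definition open_set (n : nat) (U : vec -> Prop) : Prop :=
  forall x, U x -> exists eps, 0 < eps /\ forall y, inE n y -> edist n x y < eps -> U y.

Definition compact_set (n : nat) (K : vec -> Prop) : Prop :=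
  (forall x, K x -> inE n x) /\
  forall (I : Type) (U : I -> vec -> Prop),
    (forall i, open_set n (U i)) ->
    (forall x, K x -> exists i, U i x) ->
    exists l : list I, forall x, K x -> exists i, In i l /\ U i x.

Definition sphere (m : nat) (x : vec) : Prop := inE (S m) x /\ vnorm (S m) x = 1.

Definition rel_open_sphere (m : nat) (U : vec -> Prop) : Prop :=
  (forall x, U x -> sphere m x) /\
  forall x, U x -> exists eps, 0 < eps /\
    forall y, sphere m y -> edist (S m) x y < eps -> U y.

Definition sphere_domain (m : nat) (Om : vec -> Prop) : Prop :=
  rel_open_sphere m Om /\ (exists x, Om x) /\
  ~ (exists A B : vec -> Prop,
        rel_open_sphere m A /\ rel_open_sphere m B /\
        (exists x, A x) /\ (exists x, B x) /\
        (forall x, Om x <-> (A x \/ B x)) /\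
        (forall x, ~ (A x /\ B x))).

(* rho is C^1 on Om with gradient G with respect to the round metric g_0:
   G x is tangent to S^m at x, rho(y) = rho(x) + <G x, y - x> + o(|y-x|)
   for y in Om, and G is continuous on Om. *)
Definition C1_grad (m : nat) (Om : vec -> Prop) (rho : vec -> R) (G : vec -> vec) : Prop :=
  (forall x, Om x -> inE (S m) (G x) /\ dot (S m) (G x) x = 0) /\
  (forall x, Om x -> forall eps, 0 < eps -> exists delta, 0 < delta /\
     forall y, Om y -> edist (S m) y x < delta ->
       Rabs (rho y - rho x - dot (S m) (G x) (fun i => y i - x i))
         <= eps * edist (S m) y x) /\
  (forall x, Om x -> forall eps, 0 < eps -> exists delta, 0 < delta /\
     forall y, Om y -> edist (S m) y x < delta -> edist (S m) (G y) (G x) < eps).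

Definition curve_of_length (m : nat) (Om : vec -> Prop) (rho : vec -> R)
    (x y : vec) (L : R) : Prop :=
  exists (gam dgam : R -> vec),
    gam 0 = x /\ gam 1 = y /\
    (forall t, 0 <= t <= 1 -> Om (gam t)) /\
    (forall i, (i <= m)%nat -> forall t,
        derivable_pt_lim (fun s => gam s i) t (dgam t i)) /\
    (forall i, (i <= m)%nat -> continuity (fun t => dgam t i)) /\
    exists pr : Riemann_integrable
                  (fun t => exp (rho (gam t)) * vnorm (S m) (dgam t)) 0 1,
      RiemannInt pr = L.

(* The Riemannian distance d_g(x,y) (infimum of lengths) is < eps. *)
Definition dist_g_lt (m : nat) (Om : vec -> Prop) (rho : vec -> R) (x y : vec) (eps : R) : Prop :=
  exists L, L < eps /\ curve_of_length m Om rho x y L.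

Definition complete_conformal (m : nat) (Om : vec -> Prop) (rho : vec -> R) : Prop :=
  forall u : nat -> vec, (forall k, Om (u k)) ->
    (forall eps, 0 < eps -> exists N, forall p q, (N <= p)%nat -> (N <= q)%nat ->
        dist_g_lt m Om rho (u p) (u q) eps) ->
    exists z, Om z /\
      forall eps, 0 < eps -> exists N, forall p, (N <= p)%nat ->
        dist_g_lt m Om rho (u p) z eps.

Definition closure (m : nat) (Om : vec -> Prop) (x : vec) : Prop :=
  inE (S m) x /\ forall eps, 0 < eps -> exists y, Om y /\ edist (S m) x y < eps.

(* Hyperbolic space H^{m+1} in Minkowski space L^{m+2}; index 0 is x_0. *)
Definition hyperbolic (m : nat) (v : vec) : Prop :=
  inE (S (S m)) v /\
  - (v 0%nat) ^ 2 + sumR (S m) (fun i => v (S i) ^ 2) = -1 /\ 0 < v 0%nat.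

Definition phi_map (m : nat) (rho : vec -> R) (G : vec -> vec) (x : vec) : vec :=
  let c := exp (rho x) / 2 *
           (1 + exp (-2 * rho x) * (1 + vnorm (S m) (G x) ^ 2)) in
  fun k => match k with
           | O => c
           | S i => if Nat.leb i m
                    then c * x i + exp (- rho x) * (- x i + G x i)
                    else 0
           end.

Definition proper_map (m : nat) (Om : vec -> Prop) (f : vec -> vec) : Prop :=
  forall K : vec -> Prop, (forall v, K v -> hyperbolic m v) ->
    compact_set (S (S m)) K ->
    compact_set (S m) (fun x => Om x /\ K (f x)).

(* Main.v *)
Require Import Defs.
From Stdlib Require Import Reals Lra Lia Psatz FunctionalExtensionality Classical IndefiniteDescription List ZArith.
Open Scope R_scope.

Lemma sumR_ext n f g : (forall i, (i<n)%nat -> f i = g i) -> sumR n f = sumR n g.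
Proof. induction n; simpl; intros H; auto. rewrite IHn by (intros; apply H; lia). rewrite (H n) by lia. auto. Qed.

Lemma sumR_nonneg n f : (forall i, (i<n)%nat -> 0 <= f i) -> 0 <= sumR n f.
Proof. induction n; simpl; intros H; [lra|]. assert (0 <= f n) by (apply H; lia).
 assert (0 <= sumR n f) by (apply IHn; intros; apply H; lia). lra. Qed.

Lemma sumR_le n f g : (forall i, (i<n)%nat -> f i <= g i) -> sumR n f <= sumR n g.
Proof. induction n; simpl; intros H; [lra|]. assert (f n <= g n) by (apply H; lia).
 assert (sumR n f <= sumR n g) by (apply IHn; intros; apply H; lia). lra. Qed.

Lemma sumR_le_term n f k : (forall i, (i<n)%nat -> 0 <= f i) -> (k<n)%nat -> f k <= sumR n f.
Proof. induction n; simpl; intros H Hk; [lia|].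
 assert (0 <= sumR n f) by (apply sumR_nonneg; intros; apply H; lia).
 destruct (Nat.eq_dec k n). subst; lra.
 assert (f k <= sumR n f) by (apply IHn; [intros; apply H; lia|lia]).
 assert (0 <= f n) by (apply H; lia). lra. Qed.

Lemma sumR_const n c : sumR n (fun _ => c) = INR n * c.
Proof. induction n; simpl sumR. simpl; lra. rewrite IHn, S_INR. lra. Qed.

Lemma sumR_plus n f g : sumR n (fun i => f i + g i) = sumR n f + sumR n g.
Proof. induction n; simpl; [lra|]. rewrite IHn; lra. Qed.

Lemma sumR_scal n c f : sumR n (fun i => c * f i) = c * sumR n f.
Proof. induction n; simpl; [lra|]. rewrite IHn; lra. Qed.

Lemma sumR_minus n f g : sumR n (fun i => f i - g i) = sumR n f - sumR n g.
Proof. induction n; simpl; [lra|]. rewrite IHn; lra. Qed.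

Lemma sumR_abs n f : Rabs (sumR n f) <= sumR n (fun i => Rabs (f i)).
Proof. induction n; simpl. rewrite Rabs_R0; lra.
 eapply Rle_trans. apply Rabs_triang. lra. Qed.

Lemma dot_nonneg n v : 0 <= dot n v v.
Proof. unfold dot. apply sumR_nonneg. intros. nra. Qed.

Lemma vnorm_nonneg n v : 0 <= vnorm n v.
Proof. unfold vnorm. apply sqrt_pos. Qed.

Lemma vnorm_sq n v : vnorm n v * vnorm n v = dot n v v.
Proof. unfold vnorm. apply sqrt_sqrt, dot_nonneg. Qed.

Lemma coord_le_vnorm n v k : (k<n)%nat -> Rabs (v k) <= vnorm n v.
Proof. intros Hk. unfold vnorm. rewrite <- sqrt_Rsqr_abs. apply sqrt_le_1_alt.
 unfold dot. unfold Rsqr. apply (sumR_le_term n (fun i => v i * v i)); auto. intros; nra. Qed.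

Lemma vnorm_small n v e : 0 <= e -> (forall i, (i<n)%nat -> Rabs (v i) <= e) -> vnorm n v <= INR n * e.
Proof. intros He H. unfold vnorm.
 assert (dot n v v <= INR n * e * e).
 { unfold dot. rewrite Rmult_assoc, <- sumR_const. apply sumR_le. intros i Hi.
   specialize (H i Hi). assert (v i * v i = Rabs (v i) * Rabs (v i)).
   { rewrite <- Rabs_mult. rewrite Rabs_pos_eq; nra. } rewrite H0.
   assert (0 <= Rabs (v i)) by apply Rabs_pos. nra. }
 assert (0 <= INR n) by apply pos_INR.
 assert (INR n <= INR n * INR n).
 { destruct n. simpl; lra. rewrite S_INR. assert (0<=INR n) by apply pos_INR. nra. }
 apply Rsqr_incr_0_var. rewrite Rsqr_sqrt. unfold Rsqr. nra. apply dot_nonneg. nra. Qed.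

Lemma vec_ext n u v : inE n u -> inE n v -> (forall i, (i<n)%nat -> u i = v i) -> u = v.
Proof. intros Hu Hv H. apply functional_extensionality. intros i.
 destruct (Nat.lt_ge_cases i n). auto. rewrite Hu, Hv; auto. Qed.

Lemma edist_coord n u v k : (k<n)%nat -> Rabs (u k - v k) <= edist n u v.
Proof. intros; unfold edist. apply (coord_le_vnorm n (fun i => u i - v i)); auto. Qed.

Lemma edist_refl n u : edist n u u = 0.
Proof. unfold edist, vnorm, dot. rewrite (sumR_ext _ _ (fun _ => 0)). rewrite sumR_const, Rmult_0_r, sqrt_0; auto.
 intros; ring. Qed.

Lemma edist_sym n u v : edist n u v = edist n v u.
Proof. unfold edist, vnorm, dot. f_equal. apply sumR_ext; intros; ring. Qed.

Lemma aux_div n eps : 0 < eps -> 0 < eps / (INR n + 1) /\ INR n * (eps / (INR n + 1)) < eps.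
Proof. intros. assert (0 <= INR n) by apply pos_INR.
 assert (0 < eps / (INR n + 1)) by (apply Rdiv_lt_0_compat; lra). split; auto.
 assert (eps = (INR n + 1) * (eps / (INR n + 1))) by (field; lra). nra. Qed.

Lemma aux_between x M : Rabs x <= M -> - (M + 1) <= x <= M + 1.
Proof. intros H. pose proof (Rle_abs x). pose proof (Rle_abs (-x)). rewrite Rabs_Ropp in *. lra. Qed.


Lemma dot_sym n u v : dot n u v = dot n v u.
Proof. unfold dot; apply sumR_ext; intros; ring. Qed.

Lemma dot_lin_l n a b u v w : dot n (fun i => a * u i + b * v i) w = a * dot n u w + b * dot n v w.
Proof. unfold dot. rewrite <- !sumR_scal, <- sumR_plus. apply sumR_ext; intros; ring. Qed.

Lemma dot_lin_r n a b u v w : dot n w (fun i => a * u i + b * v i) = a * dot n w u + b * dot n w v.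
Proof. rewrite dot_sym, dot_lin_l, (dot_sym n u), (dot_sym n v). auto. Qed.

Lemma dot_ext n u u' v v' : (forall i, (i<n)%nat -> u i = u' i) -> (forall i, (i<n)%nat -> v i = v' i) ->
  dot n u v = dot n u' v'.
Proof. intros. unfold dot; apply sumR_ext; intros. rewrite H, H0; auto. Qed.

Lemma edist_sq n u v : edist n u v * edist n u v = dot n u u - 2 * dot n u v + dot n v v.
Proof. unfold edist. rewrite vnorm_sq.
 replace (fun i => u i - v i) with (fun i => 1 * u i + (-1) * v i) by (apply functional_extensionality; intros; ring).
 rewrite dot_lin_l, !dot_lin_r. rewrite (dot_sym n v u). ring. Qed.

Lemma dot_abs_le n u v : Rabs (dot n u v) <= sumR n (fun i => Rabs (u i)) * vnorm n v.
Proof. unfold dot. eapply Rle_trans. apply sumR_abs. rewrite Rmult_comm, <- sumR_scal.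
 apply sumR_le. intros. rewrite Rabs_mult. rewrite (Rmult_comm (Rabs (u i))). apply Rmult_le_compat_r. apply Rabs_pos.
 apply coord_le_vnorm; auto. Qed.

Lemma dot_unit_le n e v : dot n e e = 1 -> Rabs (dot n e v) <= vnorm n v.
Proof. intros He.
 assert (H: 0 <= dot n (fun i => 1 * v i + (- dot n e v) * e i) (fun i => 1 * v i + (- dot n e v) * e i)) by apply dot_nonneg.
 rewrite dot_lin_l, !dot_lin_r, He, (dot_sym n v e) in H.
 assert (Hs := vnorm_sq n v). assert (Hp := vnorm_nonneg n v).
 rewrite <- (Rabs_pos_eq (vnorm n v)) by auto. apply Rsqr_le_abs_0. unfold Rsqr. nra. Qed.

Lemma cont_pt_eps f x : continuity_pt f x -> forall eps, 0<eps -> exists d, 0<d /\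
  forall y, Rabs (y - x) < d -> Rabs (f y - f x) < eps.
Proof. intros H eps He. destruct (H eps He) as [d [Hd Hf]]. exists d; split; auto.
 intros y Hy. destruct (Req_dec y x). subst. rewrite Rminus_diag, Rabs_R0; auto.
 apply (Hf y). split. split. exact I. auto. exact Hy. Qed.

Lemma eps_cont_pt f x : (forall eps, 0<eps -> exists d, 0<d /\
  forall y, Rabs (y - x) < d -> Rabs (f y - f x) < eps) -> continuity_pt f x.
Proof. intros H eps He. destruct (H eps He) as [d [Hd Hf]]. exists d; split; auto.
 intros y [_ Hy]. apply Hf. exact Hy. Qed.

Lemma cont_sumR n (F : nat -> R -> R) t : (forall i, (i<n)%nat -> continuity_pt (F i) t) ->
  continuity_pt (fun s => sumR n (fun i => F i s)) t.
Proof. induction n; intros H; simpl.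
 apply continuity_pt_const. intros a b; auto.
 apply (continuity_pt_plus (fun s => sumR n (fun i => F i s)) (F n)).
 apply IHn. intros; apply H; lia. apply H; lia. Qed.

Lemma cont_vnorm n (F : R -> vec) t : (forall i, (i<n)%nat -> continuity_pt (fun s => F s i) t) ->
  continuity_pt (fun s => vnorm n (F s)) t.
Proof. intros H. unfold vnorm.
 apply (continuity_pt_comp (fun s => dot n (F s) (F s)) sqrt).
 unfold dot. apply (cont_sumR n (fun i s => F s i * F s i)). intros. apply continuity_pt_mult; apply H; auto.
 apply continuity_pt_sqrt. apply dot_nonneg. Qed.

Lemma inE_sphere m x : sphere m x -> inE (S m) x.
Proof. intros [H _]; auto. Qed.

Lemma sphere_dot m x : sphere m x -> dot (S m) x x = 1.
Proof. intros [_ H]. rewrite <- vnorm_sq, H. ring. Qed.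

Lemma rho_cont m Om rho G : C1_grad m Om rho G -> forall x, Om x -> forall eps, 0 < eps ->
  exists d, 0 < d /\ forall y, Om y -> edist (S m) y x < d -> Rabs (rho y - rho x) < eps.
Proof. intros [_ [H2 _]] x Hx eps He.
 destruct (H2 x Hx 1 Rlt_0_1) as [d1 [Hd1 H1]].
 set (C := sumR (S m) (fun i => Rabs (G x i))).
 assert (HC : 0 <= C) by (apply sumR_nonneg; intros; apply Rabs_pos).
 exists (Rmin d1 (eps / (C + 2))). split. apply Rmin_glb_lt; auto. apply Rdiv_lt_0_compat; lra.
 intros y Hy Hd. assert (Hd1' : edist (S m) y x < d1) by (eapply Rlt_le_trans; [exact Hd| apply Rmin_l]).
 assert (Hd2 : edist (S m) y x < eps / (C+2)) by (eapply Rlt_le_trans; [exact Hd| apply Rmin_r]).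
 specialize (H1 y Hy Hd1').
 assert (H3 := dot_abs_le (S m) (G x) (fun i => y i - x i)).
 fold C in H3. change (vnorm (S m) (fun i => y i - x i)) with (edist (S m) y x) in H3.
 assert (0 <= edist (S m) y x) by apply vnorm_nonneg.
 assert (Rabs (rho y - rho x) <= (C + 1) * edist (S m) y x).
 { pose proof (Rabs_triang (rho y - rho x - dot (S m) (G x) (fun i => y i - x i)) (dot (S m) (G x) (fun i => y i - x i))).
   replace (rho y - rho x - dot (S m) (G x) (fun i : nat => y i - x i) + dot (S m) (G x) (fun i : nat => y i - x i)) with (rho y - rho x) in H0 by ring. lra. }
 assert ((C+2) * edist (S m) y x < eps).
 { apply (Rmult_lt_compat_l (C+2)) in Hd2; [|lra]. replace ((C + 2) * (eps / (C + 2))) with eps in Hd2 by (field; lra). auto. }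
 nra. Qed.

Lemma dot_minus_r n w u v : dot n w (fun i => u i - v i) = dot n w u - dot n w v.
Proof. unfold dot. rewrite <- sumR_minus. apply sumR_ext; intros; ring. Qed.

Lemma nat_large X : exists N:nat, X < INR N.
Proof. destruct (archimed (Rabs X)) as [H _].
 assert (Hp : (0 <= up (Rabs X))%Z).
 { apply le_IZR. pose proof (Rabs_pos X). simpl. apply Rlt_le in H. 
   assert (IZR (-1) < IZR (up (Rabs X))) by (simpl; lra). apply lt_IZR in H1. apply IZR_le. lia. }
 exists (Z.to_nat (up (Rabs X))). rewrite INR_IZR_INZ, Z2Nat.id by auto.
 pose proof (Rle_abs X). lra. Qed.

Lemma dot_CS n u v : Rabs (dot n u v) <= vnorm n u * vnorm n v.
Proof. destruct (Req_dec (vnorm n u) 0) as [H0|H0].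
 - assert (Hu : forall i, (i<n)%nat -> u i = 0).
   { intros i Hi. pose proof (coord_le_vnorm n u i Hi). rewrite H0 in H. pose proof (Rabs_pos (u i)).
     assert (Rabs (u i) = 0) by lra. destruct (Req_dec (u i) 0); auto. apply Rabs_no_R0 in H3. lra. }
   rewrite (dot_ext n u (fun _ => 0) v v) by auto. unfold dot. rewrite (sumR_ext _ _ (fun _ => 0)).
   rewrite sumR_const, Rmult_0_r, Rabs_R0. rewrite H0. lra. intros; ring.
 - pose proof (vnorm_nonneg n u). set (c := vnorm n u) in *.
   set (e := fun i => / c * u i + 0 * u i).
   assert (Hee : dot n e e = 1). { unfold e. rewrite dot_lin_l, !dot_lin_r. rewrite <- vnorm_sq. fold c. field. auto. }
   assert (Hev : dot n e v = / c * dot n u v). { unfold e. rewrite dot_lin_l. ring. }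
   pose proof (dot_unit_le n e v Hee). rewrite Hev, Rabs_mult, Rabs_inv, (Rabs_pos_eq c) in H1 by lra.
   assert (0 < c) by lra.
   apply (Rmult_le_compat_l c) in H1; [|lra]. rewrite <- Rmult_assoc, Rinv_r, Rmult_1_l in H1 by lra. auto. Qed.

Lemma vnorm_triang n u v : vnorm n (fun i => u i + v i) <= vnorm n u + vnorm n v.
Proof. pose proof (vnorm_nonneg n u). pose proof (vnorm_nonneg n v). pose proof (vnorm_nonneg n (fun i => u i + v i)).
 apply Rsqr_incr_0_var; [|lra]. unfold Rsqr. rewrite vnorm_sq.
 replace (fun i => u i + v i) with (fun i => 1 * u i + 1 * v i) by (apply functional_extensionality; intros; ring).
 rewrite dot_lin_l, !dot_lin_r. pose proof (dot_CS n u v). pose proof (Rle_abs (dot n u v)).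
 rewrite (dot_sym n v u). rewrite <- (vnorm_sq n u), <- (vnorm_sq n v). nra. Qed.

Lemma vnorm_ext n u v : (forall i, (i<n)%nat -> u i = v i) -> vnorm n u = vnorm n v.
Proof. intros H. unfold vnorm. f_equal. apply dot_ext; auto. Qed.

Lemma edist_triang n u v w : edist n u w <= edist n u v + edist n v w.
Proof. unfold edist. rewrite (vnorm_ext n (fun i => u i - w i) (fun i => (u i - v i) + (v i - w i))) by (intros; ring).
 apply (vnorm_triang n (fun i => u i - v i) (fun i => v i - w i)). Qed.

Lemma closure_sphere m Om p : (forall x, Om x -> sphere m x) -> closure m Om p -> sphere m p.
Proof. intros Hs [Hin Hcl]. split; auto.
 assert (forall eps, 0 < eps -> Rabs (vnorm (S m) p - 1) < eps).
 { intros eps He. destruct (Hcl eps He) as [y [Hy Hd]]. destruct (Hs y Hy) as [_ Hy1].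
   pose proof (vnorm_triang (S m) y (fun i => p i - y i)). cbv beta in H.
   rewrite (vnorm_ext (S m) (fun i => y i + (p i - y i)) p) in H by (intros; ring).
   pose proof (vnorm_triang (S m) p (fun i => y i - p i)). cbv beta in H0.
   rewrite (vnorm_ext (S m) (fun i => p i + (y i - p i)) y) in H0 by (intros; ring).
   fold (edist (S m) p y) in H. fold (edist (S m) y p) in H0. rewrite edist_sym in H0.
   apply Rabs_def1; lra. }
 destruct (Req_dec (vnorm (S m) p) 1); auto. exfalso.
 specialize (H (Rabs (vnorm (S m) p - 1))). 
 assert (0 < Rabs (vnorm (S m) p - 1)) by (apply Rabs_pos_lt; lra). specialize (H H1). lra. Qed.

Lemma eq_from_small a b : (forall eps, 0 < eps -> Rabs (a - b) < 2 * eps) -> a = b.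
Proof. intros H. destruct (Req_dec a b); auto. exfalso.
 assert (0 < Rabs (a - b)) by (apply Rabs_pos_lt; lra).
 specialize (H (Rabs (a - b) / 2)). assert (0 < Rabs (a - b) / 2) by lra. specialize (H H2). lra. Qed.

Lemma small_frac ts k N : 0 < ts -> (N <= k)%nat -> 0 < ts / (INR k + 2) <= ts / (INR N + 2).
Proof. intros Hts Hk. apply le_INR in Hk. pose proof (pos_INR N). split.
 apply Rdiv_lt_0_compat; lra.
 unfold Rdiv. apply Rmult_le_compat_l. lra. apply Rinv_le_contravar; lra. Qed.

Lemma frac_lt ts X N : 0 < ts -> 0 < X -> ts / X < INR N -> ts / (INR N + 2) < X.
Proof. intros Hts HX H. pose proof (pos_INR N).
 apply (Rmult_lt_compat_r X) in H; auto. unfold Rdiv in H. rewrite Rmult_assoc, Rinv_l, Rmult_1_r in H by lra.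
 apply (Rmult_lt_reg_r (INR N + 2)). lra. unfold Rdiv. rewrite Rmult_assoc, Rinv_l, Rmult_1_r by lra. nra. Qed.


Lemma deriv_sumR n (F F' : nat -> R -> R) t : (forall i, (i<n)%nat -> derivable_pt_lim (F i) t (F' i t)) ->
  derivable_pt_lim (fun s => sumR n (fun i => F i s)) t (sumR n (fun i => F' i t)).
Proof. induction n; intros H; simpl.
 apply derivable_pt_lim_const.
 apply (derivable_pt_lim_plus (fun s => sumR n (fun i => F i s)) (F n)).
 apply IHn; intros; apply H; lia. apply H; lia. Qed.

Lemma lub_approx (E : R -> Prop) t0 a : is_lub E t0 -> a < t0 -> exists t, E t /\ a < t.
Proof. intros [Hub Hl] Ha. apply Classical_Prop.NNPP. intros Hn.
 assert (t0 <= a). { apply Hl. intros t Et. apply Rnot_lt_le. intros Hlt. apply Hn. exists t; auto. } lra. Qed.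

Lemma integral_nonneg f a b (pr : Riemann_integrable f a b) : a <= b -> (forall x, a < x < b -> 0 <= f x) -> 0 <= RiemannInt pr.
Proof. intros Hab H. assert (H0 := RiemannInt_P19 (RiemannInt_P14 a b 0) pr Hab H).
 rewrite RiemannInt_P15 in H0. lra. Qed.

Section Short.
Variables (m : nat) (Om : vec -> Prop) (rho : vec -> R) (G : vec -> vec).
Hypothesis HC1 : C1_grad m Om rho G.

Lemma short_curve z : Om z -> forall eps, 0 < eps -> exists eta, 0 < eta /\
  forall y L, L < eta -> curve_of_length m Om rho y z L -> edist (S m) y z < eps.
Proof.
 intros Hz eps Heps.
 destruct (rho_cont m Om rho G HC1 z Hz 1 Rlt_0_1) as [d [Hd Hrho]].
 set (e' := Rmin eps (d/2)).
 assert (He' : 0 < e') by (apply Rmin_glb_lt; lra).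
 set (K := exp (rho z - 1)).
 assert (HK : 0 < K) by apply exp_pos.
 exists (K * e'). split. nra.
 intros y L HL [gam [dgam [H0 [H1 [Hom [Hder [Hcont [pr Hpr]]]]]]]].
 destruct (Rlt_dec (edist (S m) y z) e') as [Hlt|Hge].
 { eapply Rlt_le_trans; [exact Hlt|apply Rmin_l]. }
 exfalso. apply Rnot_lt_le in Hge.
 set (h := fun t => edist (S m) (gam t) z).
 assert (Hcomp : forall i, (i < S m)%nat -> forall t, continuity_pt (fun s => gam s i) t).
 { intros i Hi t. apply derivable_continuous_pt. exists (dgam t i). apply Hder. lia. }
 assert (Hh : forall t, continuity_pt h t).
 { intros t. unfold h, edist. apply (cont_vnorm (S m) (fun s i => gam s i - z i)).
   intros i Hi. apply (continuity_pt_minus (fun s => gam s i) (fun _ => z i)). apply Hcomp; auto.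
   apply continuity_pt_const. intros a b; auto. }
 set (E := fun t => 0 <= t <= 1 /\ e' <= h t).
 assert (HE0 : E 0). { split. lra. unfold h. rewrite H0. auto. }
 assert (Hbd : bound E). { exists 1. intros t [Ht _]. lra. }
 destruct (completeness E Hbd (ex_intro _ 0 HE0)) as [t0 Ht0].
 assert (Ht0a : 0 <= t0) by (apply Ht0; auto).
 assert (Ht0b : t0 <= 1). { apply Ht0. intros t [Ht _]. lra. }
 assert (HA : e' <= h t0).
 { apply Rnot_lt_le. intros Hlt.
   destruct (cont_pt_eps h t0 (Hh t0) (e' - h t0)) as [al [Hal Hc]]. lra.
   destruct (lub_approx E t0 (t0 - al/2) Ht0) as [t [[Ht Eht] Hat]]. lra.
   assert (t <= t0) by (apply Ht0; split; auto).
   assert (Rabs (t - t0) < al) by (apply Rabs_def1; lra).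
   specialize (Hc t H2). apply Rabs_def2 in Hc. lra. }
 assert (Hh1 : h 1 = 0). { unfold h. rewrite H1. apply edist_refl. }
 assert (Ht01 : t0 < 1). { destruct Ht0b; auto. subst. lra. }
 assert (HB : forall t, t0 < t <= 1 -> h t < e').
 { intros t Ht. apply Rnot_le_lt. intros Hle. assert (t <= t0) by (apply Ht0; split; [lra|auto]). lra. }
 assert (Hrb : forall t, t0 < t < 1 -> K <= exp (rho (gam t))).
 { intros t Ht. unfold K. 
   assert (Hx : Rabs (rho (gam t) - rho z) < 1).
   { apply Hrho. apply Hom; lra. assert (h t < e') by (apply HB; lra). unfold h in H.
     assert (e' <= d/2) by apply Rmin_r. lra. }
   apply Rabs_def2 in Hx. apply Rlt_le, exp_increasing. lra. }
 set (c := h t0). assert (Hc : 0 < c) by (unfold c; lra).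
 set (dd := fun i => gam t0 i - z i).
 assert (Hcdd : dot (S m) dd dd = c * c). { unfold c, h, edist. rewrite vnorm_sq. auto. }
 set (ev := fun i => / c * dd i).
 assert (Hee : dot (S m) ev ev = 1).
 { unfold dot. rewrite (sumR_ext _ _ (fun i => (/c * /c) * (dd i * dd i))). rewrite sumR_scal.
   fold (dot (S m) dd dd). rewrite Hcdd. field. lra. intros; unfold ev; ring. }
 assert (Hed : dot (S m) ev dd = c).
 { unfold dot. rewrite (sumR_ext _ _ (fun i => (/c) * (dd i * dd i))). rewrite sumR_scal.
   fold (dot (S m) dd dd). rewrite Hcdd. field. lra. intros; unfold ev; ring. }
 set (F := fun t => -(K * dot (S m) ev (gam t))).
 set (F' := fun t => -(K * dot (S m) ev (dgam t))).
 assert (HF : forall t, derivable_pt_lim F t (F' t)).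
 { intros t. unfold F, F'.
   apply (derivable_pt_lim_opp (fun t => K * dot (S m) ev (gam t))).
   apply (derivable_pt_lim_scal (fun t => dot (S m) ev (gam t))).
   unfold dot. apply (deriv_sumR (S m) (fun i s => ev i * gam s i) (fun i t => ev i * dgam t i)).
   intros i Hi. apply (derivable_pt_lim_scal (fun s => gam s i)). apply Hder. lia. }
 assert (HF'c : continuity F').
 { intros t. unfold F'.
   apply (continuity_pt_opp (fun t => K * dot (S m) ev (dgam t))).
   apply (continuity_pt_scal (fun t => dot (S m) ev (dgam t))).
   unfold dot. apply (cont_sumR (S m) (fun i s => ev i * dgam s i)).
   intros i Hi. apply (continuity_pt_scal (fun s => dgam s i)). apply Hcont. lia. }
 set (diff := fun t => exist (fun l => derivable_pt_lim F t l) (F' t) (HF t) : derivable_pt F t).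
 set (C := @mkC1 F diff HF'c).
 assert (Ht01' : t0 <= 1) by lra.
 set (prF := continuity_implies_RiemannInt (f := derive F diff) Ht01' (fun x _ => HF'c x)).
 assert (HFTC := @RiemannInt_P33 C t0 1 prF Ht01').
 simpl in HFTC.
 assert (HF1 : F 1 - F t0 = K * c).
 { unfold F. rewrite H1. rewrite <- Hed. unfold dd. rewrite dot_minus_r. ring. }
 set (pr1 := RiemannInt_P22 pr (conj Ht0a Ht0b)).
 set (pr2 := RiemannInt_P23 pr (conj Ht0a Ht0b)).
 assert (HP26 := RiemannInt_P26 pr1 pr2 pr).
 assert (H1nn : 0 <= RiemannInt pr1).
 { apply integral_nonneg. auto. intros x _. assert (0 < exp (rho (gam x))) by apply exp_pos.
   assert (0 <= vnorm (S m) (dgam x)) by apply vnorm_nonneg. nra. }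
 assert (Hcmp : RiemannInt prF <= RiemannInt pr2).
 { apply RiemannInt_P19. auto. intros x Hx. change (F' x <= exp (rho (gam x)) * vnorm (S m) (dgam x)).
   unfold F'. assert (Hu := dot_unit_le (S m) ev (dgam x) Hee).
   pose proof (Rle_abs (- dot (S m) ev (dgam x))). rewrite Rabs_Ropp in H.
   assert (K <= exp (rho (gam x))) by (apply Hrb; lra).
   assert (0 <= vnorm (S m) (dgam x)) by apply vnorm_nonneg. nra. }
 assert (HAc : e' <= c) by exact HA. assert (HKc : K * e' <= K * c) by nra.
 lra.
Qed.
End Short.


Module CQ.
From Coquelicot Require Import Coquelicot.
Lemma dgc_deriv_aux a c qi wi s : derivable_pt_lim (fun s => cos (a + s * c) * qi + sin (a + s * c) * wi) s
  (c * (- sin (a + s * c) * qi + cos (a + s * c) * wi)).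
Proof. apply is_derive_Reals. auto_derive. auto. ring. Qed.
End CQ.


Section GC.
Variables (m : nat) (q w : vec).
Hypotheses (Hq : inE (S m) q) (Hw : inE (S m) w) (Hqq : dot (S m) q q = 1) (Hww : dot (S m) w w = 1)
  (Hqw : dot (S m) q w = 0).

Definition gc (t : R) : vec := fun i => cos t * q i + sin t * w i.

Lemma gc_inE t : inE (S m) (gc t).
Proof. intros i Hi. unfold gc. rewrite Hq, Hw by auto. ring. Qed.

Lemma gc_dot t s : dot (S m) (gc t) (gc s) = cos (t - s).
Proof. unfold gc. rewrite dot_lin_l, !dot_lin_r, Hqq, Hww, Hqw, (dot_sym _ w q), Hqw, cos_minus. ring. Qed.

Lemma gc_sphere t : sphere m (gc t).
Proof. split. apply gc_inE. unfold vnorm. rewrite gc_dot, Rminus_diag, cos_0, sqrt_1. auto. Qed.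

Lemma gc_edist_sq t s : edist (S m) (gc t) (gc s) * edist (S m) (gc t) (gc s) = 2 - 2 * cos (t - s).
Proof. rewrite edist_sq, !gc_dot, !Rminus_diag, cos_0. ring. Qed.

Lemma sq_lt a b : 0 <= a -> 0 <= b -> a * a < b * b -> a < b.
Proof. intros. nra. Qed.

Lemma gc_cont : forall eps, 0 < eps -> exists d, 0 < d /\ forall t s, Rabs (t - s) < d -> edist (S m) (gc t) (gc s) < eps.
Proof. intros eps He.
 destruct (cont_pt_eps cos 0 (continuity_cos 0) (eps * eps / 2)) as [d [Hd Hc]]. nra.
 exists d; split; auto. intros t s Hts. apply sq_lt. apply vnorm_nonneg. lra.
 rewrite gc_edist_sq. specialize (Hc (t - s)). rewrite Rminus_0_r, cos_0 in Hc. specialize (Hc Hts).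
 apply Rabs_def2 in Hc. lra. Qed.

Definition dgc (a c : R) (s : R) : vec := fun i => c * (- sin (a + s * c) * q i + cos (a + s * c) * w i).

Lemma dgc_deriv a c i s : derivable_pt_lim (fun s => gc (a + s * c) i) s (dgc a c s i).
Proof. unfold gc, dgc. apply CQ.dgc_deriv_aux. Qed.

Lemma dgc_cont a c i : continuity (fun s => dgc a c s i).
Proof. unfold dgc. reg. Qed.

Lemma dgc_norm a c s : vnorm (S m) (dgc a c s) = Rabs c.
Proof. unfold vnorm, dgc.
 replace (fun i => c * (- sin (a + s * c) * q i + cos (a + s * c) * w i)) with
   (fun i => (- c * sin (a + s * c)) * q i + (c * cos (a + s * c)) * w i)
   by (apply functional_extensionality; intros; ring).
 rewrite dot_lin_l, !dot_lin_r, Hqq, Hww, Hqw, (dot_sym _ w q), Hqw.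
 rewrite <- sqrt_Rsqr_abs. f_equal. unfold Rsqr.
 pose proof (sin2_cos2 (a + s * c)). unfold Rsqr in H. nra. Qed.

End GC.


Section Curve.
Variables (m : nat) (Om : vec -> Prop) (rho : vec -> R) (G : vec -> vec).
Hypothesis HC1 : C1_grad m Om rho G.
Variables (q w : vec).
Hypotheses (Hq : inE (S m) q) (Hw : inE (S m) w) (Hqq : dot (S m) q q = 1) (Hww : dot (S m) w w = 1)
  (Hqw : dot (S m) q w = 0).
Variables (ts Eb : R).
Hypothesis Hgood : forall t, 0 <= t < ts -> Om (gc q w t).
Hypothesis Hbd : forall t, 0 <= t < ts -> exp (rho (gc q w t)) < Eb.

Lemma curve_gc a b : 0 < a < ts -> 0 < b < ts -> exists L, L <= Eb * Rabs (b - a) /\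
  curve_of_length m Om rho (gc q w a) (gc q w b) L.
Proof.
 intros Ha Hb. set (c := b - a).
 set (lo := Rmin a b). set (hi := Rmax a b).
 assert (Hlo : 0 < lo) by (unfold lo, Rmin; destruct Rle_dec; lra).
 assert (Hhi : hi < ts) by (unfold hi, Rmax; destruct Rle_dec; lra).
 assert (Hbet : forall s, 0 <= s <= 1 -> lo <= a + s * c <= hi).
 { intros s Hs. unfold lo, hi, c, Rmin, Rmax; destruct Rle_dec; nra. }
 set (I := fun t => exp (rho (gc q w (a + t * c))) * vnorm (S m) (dgc q w a c t)).
 assert (HI : forall t, I t = exp (rho (gc q w (a + t * c))) * Rabs c).
 { intros t. unfold I. rewrite dgc_norm; auto. }
 assert (Hcont : forall x, 0 <= x <= 1 -> continuity_pt I x).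
 { intros x Hx. apply eps_cont_pt. intros eps He.
   set (px := a + x * c).
   assert (Hpx := Hbet x Hx). fold px in Hpx.
   assert (Hopx : Om (gc q w px)) by (apply Hgood; lra).
   destruct (cont_pt_eps exp (rho (gc q w px)) (derivable_continuous_pt _ _ (derivable_pt_exp _)) (eps / (Rabs c + 1)))
     as [de [Hde Hexp]]. apply Rdiv_lt_0_compat; [lra| pose proof (Rabs_pos c); lra].
   destruct (rho_cont m Om rho G HC1 (gc q w px) Hopx de Hde) as [dr [Hdr Hrc]].
   destruct (gc_cont m q w Hqq Hww Hqw dr Hdr) as [dg [Hdg Hgc]].
   set (mu := Rmin (Rmin lo (ts - hi)) dg).
   assert (Hmu : 0 < mu) by (unfold mu; repeat apply Rmin_glb_lt; lra).
   assert (Hc0 : 0 <= Rabs c) by apply Rabs_pos.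
   exists (mu / (Rabs c + 1)). split. apply Rdiv_lt_0_compat; lra.
   intros y Hy. set (py := a + y * c).
   assert (Hpp : Rabs (py - px) < mu).
   { unfold py, px. replace (a + y * c - (a + x * c)) with ((y - x) * c) by ring.
     rewrite Rabs_mult. assert (0 <= Rabs (y - x)) by apply Rabs_pos.
     assert (Rabs (y - x) * (Rabs c + 1) < mu).
     { apply (Rmult_lt_compat_r (Rabs c + 1)) in Hy; [|lra].
       replace (mu / (Rabs c + 1) * (Rabs c + 1)) with mu in Hy by (field; lra). auto. }
     nra. }
   assert (Hm1 : mu <= lo) by (unfold mu; eapply Rle_trans; [apply Rmin_l|apply Rmin_l]).
   assert (Hm2 : mu <= ts - hi) by (unfold mu; eapply Rle_trans; [apply Rmin_l|apply Rmin_r]).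
   assert (Hm3 : mu <= dg) by (unfold mu; apply Rmin_r).
   apply Rabs_def2 in Hpp as Hpp'.
   assert (Hopy : Om (gc q w py)) by (apply Hgood; lra).
   assert (Hd1 : edist (S m) (gc q w py) (gc q w px) < dr) by (apply Hgc; lra).
   specialize (Hrc _ Hopy Hd1).
   assert (Hrc' : Rabs (rho (gc q w py) - rho (gc q w px)) < de) by auto.
   specialize (Hexp _ Hrc').
   rewrite !HI. fold py px.
   replace (exp (rho (gc q w py)) * Rabs c - exp (rho (gc q w px)) * Rabs c) with
     ((exp (rho (gc q w py)) - exp (rho (gc q w px))) * Rabs c) by ring.
   rewrite Rabs_mult, (Rabs_pos_eq (Rabs c)) by auto.
   assert (Rabs (exp (rho (gc q w py)) - exp (rho (gc q w px))) * (Rabs c + 1) < eps).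
   { apply (Rmult_lt_compat_r (Rabs c + 1)) in Hexp; [|lra].
     replace (eps / (Rabs c + 1) * (Rabs c + 1)) with eps in Hexp by (field; lra). auto. }
   assert (0 <= Rabs (exp (rho (gc q w py)) - exp (rho (gc q w px)))) by apply Rabs_pos.
   nra. }
 assert (H01 : 0 <= 1) by lra.
 set (pr := continuity_implies_RiemannInt H01 Hcont).
 exists (RiemannInt pr). split.
 - assert (Hle := RiemannInt_P19 pr (RiemannInt_P14 0 1 (Eb * Rabs c)) H01).
   rewrite RiemannInt_P15 in Hle. unfold c in *. rewrite Rminus_0_r, Rmult_1_r in Hle. apply Hle.
   intros x Hx. rewrite HI. unfold fct_cte.
   apply Rmult_le_compat_r. apply Rabs_pos. apply Rlt_le, Hbd.
   assert (Hx' : 0 <= x <= 1) by lra. specialize (Hbet x Hx'). lra.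
 - exists (fun s => gc q w (a + s * c)), (dgc q w a c).
   split. f_equal. ring.
   split. f_equal. unfold c. ring.
   split. intros t Ht. apply Hgood. specialize (Hbet t Ht). lra.
   split. intros i Hi t. apply dgc_deriv.
   split. intros i Hi. apply dgc_cont.
   exists pr. reflexivity.
Qed.
End Curve.


Section PartA.
Variables (m : nat) (Om : vec -> Prop) (rho : vec -> R) (G : vec -> vec) (sig : vec -> R).
Hypothesis Hop : rel_open_sphere m Om.
Hypothesis HC1 : C1_grad m Om rho G.
Hypothesis Hcpl : complete_conformal m Om rho.
Hypothesis Hsig1 : forall x, Om x -> sig x = exp (- rho x).
Hypothesis Hsig2 : forall x, closure m Om x -> forall eps, 0 < eps -> exists delta, 0 < delta /\
        forall y, closure m Om y -> edist (S m) y x < delta -> Rabs (sig y - sig x) < eps.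

Lemma Om_closure x : Om x -> closure m Om x.
Proof. intros Hx. split. apply inE_sphere. apply (proj1 Hop); auto.
 intros eps He. exists x. split; auto. rewrite edist_refl; auto. Qed.

Lemma boundary_sig p : closure m Om p -> ~ Om p -> sig p <= 0.
Proof.
 intros Hcl Hnp. apply Rnot_lt_le. intros Hs.
 destruct (Hsig2 p Hcl (sig p / 2)) as [dl [Hdl Hsd]]. lra.
 set (r := Rmin dl 1).
 assert (Hr : 0 < r) by (unfold r; apply Rmin_glb_lt; lra).
 destruct (proj2 Hcl r Hr) as [q [Hq Hpq]].
 assert (Hsp : sphere m p) by (apply (closure_sphere m Om); auto; apply (proj1 Hop)).
 assert (Hsq : sphere m q) by (apply (proj1 Hop); auto).
 set (d := dot (S m) p q).
 assert (Hpp := sphere_dot m p Hsp). assert (Hqq := sphere_dot m q Hsq).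
 assert (Hed : edist (S m) p q * edist (S m) p q = 2 - 2 * d).
 { rewrite edist_sq, Hpp, Hqq. unfold d. ring. }
 assert (Hed0 : 0 <= edist (S m) p q) by apply vnorm_nonneg.
 assert (Hr1 : r <= 1) by apply Rmin_r.
 assert (Hd1 : 1/2 < d) by nra.
 assert (Hd2 : d < 1).
 { apply Rnot_le_lt. intros Hle. apply Hnp.
   assert (Hz : edist (S m) p q = 0) by nra.
   assert (p = q). { apply (vec_ext (S m)). apply Hsp. apply Hsq. intros i Hi.
     pose proof (edist_coord (S m) p q i Hi). rewrite Hz in H. pose proof (Rabs_pos (p i - q i)).
     assert (Rabs (p i - q i) = 0) by lra. destruct (Req_dec (p i - q i) 0). lra.
     apply Rabs_no_R0 in H2. lra. }
   subst; auto. }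
 set (th := acos d).
 assert (Hcth : cos th = d) by (apply cos_acos; lra).
 assert (Hsth : sin th = sqrt (1 - d * d)).
 { unfold th. rewrite sin_acos by lra. unfold Rsqr. auto. }
 assert (Hsth0 : 0 < sin th) by (rewrite Hsth; apply sqrt_lt_R0; nra).
 assert (Hsth2 : sin th * sin th = 1 - d * d) by (rewrite Hsth; apply sqrt_sqrt; nra).
 assert (Hthb : 0 <= th <= PI) by apply acos_bound.
 set (s := sin th) in *.
 set (w := fun i => / s * p i + (- d / s) * q i).
 assert (Hqw : dot (S m) q w = 0).
 { unfold w. rewrite dot_lin_r, Hqq, (dot_sym _ q p). fold d. field. intro; lra. }
 assert (Hww : dot (S m) w w = 1).
 { unfold w. rewrite dot_lin_l, !dot_lin_r, Hqq, Hpp, (dot_sym _ q p). fold d.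
   fold s in Hsth2. transitivity ((1 - d * d) / (s * s)). field; intro; lra.
   rewrite <- Hsth2. field; intro; lra. }
 assert (Hpin : inE (S m) p) by apply Hsp.
 assert (Hqin : inE (S m) q) by apply Hsq.
 assert (Hwin : inE (S m) w).
 { intros i Hi. unfold w. rewrite Hpin, Hqin by auto. ring. }
 assert (Hgth : gc q w th = p).
 { apply functional_extensionality. intros i. unfold gc, w. fold s. rewrite Hcth. field. lra. }
 assert (Hg0 : gc q w 0 = q).
 { apply functional_extensionality. intros i. unfold gc. rewrite cos_0, sin_0. ring. }
 set (E := fun t => 0 <= t <= th /\ forall tau, 0 <= tau <= t -> Om (gc q w tau)).
 assert (HE0 : E 0). { split. lra. intros tau Ht. replace tau with 0 by lra. rewrite Hg0; auto. }
 assert (HEb : bound E). { exists th. intros t [Ht _]. lra. }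
 destruct (completeness E HEb (ex_intro _ 0 HE0)) as [ts Hts].
 assert (Hts0 : 0 <= ts) by (apply Hts; auto).
 assert (Htsth : ts <= th) by (apply Hts; intros t [Ht _]; lra).
 assert (Hgood : forall tau, 0 <= tau < ts -> Om (gc q w tau)).
 { intros tau Ht. destruct (lub_approx E ts tau Hts) as [t [[Ht1 Ht2] Hlt]]. lra.
   apply Ht2. lra. }
 assert (Hnot : ~ Om (gc q w ts)).
 { intros Ho. destruct (proj2 Hop _ Ho) as [eo [Heo Hopn]].
   destruct (gc_cont m q w Hqq Hww Hqw eo Heo) as [dg [Hdg Hgc]].
   destruct (Req_dec ts th) as [Heq|Hne].
   - rewrite Heq, Hgth in Ho. auto.
   - set (t' := Rmin th (ts + dg / 2)).
     assert (Ht'1 : t' <= th) by apply Rmin_l.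
     assert (Ht'2 : t' <= ts + dg/2) by apply Rmin_r.
     assert (Ht'3 : ts < t') by (unfold t'; apply Rmin_glb_lt; lra).
     assert (E t').
     { split. lra. intros tau Htau. destruct (Rlt_dec tau ts). apply Hgood; lra.
       apply Hopn. apply gc_sphere; auto. apply Hgc. apply Rabs_def1; lra. }
     assert (t' <= ts) by (apply Hts; auto). lra. }
 assert (Hts0' : 0 < ts).
 { destruct Hts0; auto. rewrite <- H, Hg0 in Hnot. contradiction. }
 set (Eb := 2 / sig p).
 assert (Hbd : forall tau, 0 <= tau < ts -> exp (rho (gc q w tau)) < Eb).
 { intros tau Ht. assert (Ho := Hgood tau Ht).
   assert (Hdist : edist (S m) (gc q w tau) p < dl).
   { rewrite <- Hgth. apply sq_lt. apply vnorm_nonneg. lra.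
     rewrite gc_edist_sq by auto.
     assert (cos th <= cos (tau - th)).
     { replace (tau - th) with (- (th - tau)) by ring. rewrite cos_neg.
       apply cos_decr_1; lra. }
     assert (Hrd : r <= dl) by apply Rmin_l.
     assert (edist (S m) p q * edist (S m) p q < dl * dl) by nra. lra. }
   specialize (Hsd _ (Om_closure _ Ho) Hdist). rewrite Hsig1 in Hsd by auto.
   apply Rabs_def2 in Hsd. unfold Eb.
   rewrite exp_Ropp in Hsd. assert (0 < exp (rho (gc q w tau))) by apply exp_pos.
   apply (Rmult_lt_reg_r (/ exp (rho (gc q w tau)))). apply Rinv_0_lt_compat; auto.
   rewrite Rinv_r by lra. unfold Rdiv. 
   apply (Rmult_lt_reg_r (sig p / 2)). lra. field_simplify; lra. }
 assert (HEb0 : 0 < Eb) by (unfold Eb; apply Rdiv_lt_0_compat; lra).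
 set (tk := fun k : nat => ts - ts / (INR k + 2)).
 assert (Htk : forall k, 0 < tk k < ts).
 { intros k. destruct (small_frac ts k 0 Hts0' (Nat.le_0_l k)) as [h1 h2]. simpl in h2.
   assert (ts / (0+2) = ts / 2) by (f_equal; ring). unfold tk. lra. }
 set (uk := fun k => gc q w (tk k)).
 assert (Hu : forall k, Om (uk k)) by (intros k; apply Hgood; specialize (Htk k); lra).
 assert (Hcau : forall eps, 0 < eps -> exists N, forall a b, (N <= a)%nat -> (N <= b)%nat ->
        dist_g_lt m Om rho (uk a) (uk b) eps).
 { intros eps He. destruct (nat_large (ts / (eps / Eb))) as [N HN]. exists N. intros a b Ha Hb.
   destruct (curve_gc m Om rho G HC1 q w Hqq Hww Hqw ts Eb Hgood Hbd (tk a) (tk b) (Htk a) (Htk b)) as [L [HL Hc]].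
   exists L. split; auto.
   assert (Hf := frac_lt ts (eps / Eb) N Hts0' (Rdiv_lt_0_compat _ _ He HEb0) HN).
   destruct (small_frac ts a N Hts0' Ha). destruct (small_frac ts b N Hts0' Hb).
   assert (Rabs (tk b - tk a) <= ts / (INR N + 2)) by (unfold tk; apply Rabs_le; lra).
   assert (Eb * (ts / (INR N + 2)) < eps).
   { apply (Rmult_lt_compat_l Eb) in Hf; auto. replace (Eb * (eps / Eb)) with eps in Hf by (field; lra). auto. }
   assert (Eb * Rabs (tk b - tk a) <= Eb * (ts / (INR N + 2))) by (apply Rmult_le_compat_l; lra).
   lra. }
 destruct (Hcpl uk Hu Hcau) as [z [Hz Hconv]].
 apply Hnot. replace (gc q w ts) with z; auto.
 apply (vec_ext (S m)). apply inE_sphere, (proj1 Hop); auto. apply gc_inE; auto.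
 intros i Hi. apply eq_from_small. intros eps He.
 destruct (short_curve m Om rho G HC1 z Hz eps He) as [eta [Heta Hsc]].
 destruct (Hconv eta Heta) as [N1 HN1].
 destruct (gc_cont m q w Hqq Hww Hqw eps He) as [dg [Hdg Hgc]].
 destruct (nat_large (ts / dg)) as [N2 HN2].
 set (k := max N1 N2).
 destruct (HN1 k (Nat.le_max_l _ _)) as [L [HL Hcv]].
 assert (H1 := Hsc _ _ HL Hcv).
 assert (Hf := frac_lt ts dg N2 Hts0' Hdg HN2).
 destruct (small_frac ts k N2 Hts0' (Nat.le_max_r _ _)).
 assert (H2 : edist (S m) (uk k) (gc q w ts) < eps).
 { apply Hgc. unfold tk. apply Rabs_def1; lra. }
 pose proof (edist_triang (S m) z (uk k) (gc q w ts)).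
 rewrite edist_sym in H1.
 pose proof (edist_coord (S m) z (gc q w ts) i Hi). lra.
Qed.
End PartA.


Lemma cv_sumR n (F : nat -> nat -> R) (l : nat -> R) : (forall k, (k < n)%nat -> Un_cv (fun j => F j k) (l k)) ->
  Un_cv (fun j => sumR n (F j)) (sumR n l).
Proof. induction n; intros H; simpl.
 intros eps He. exists 0%nat. intros. unfold R_dist. rewrite Rminus_diag, Rabs_R0; auto.
 apply (CV_plus (fun j => sumR n (F j)) (fun j => F j n)). apply IHn; intros; apply H; lia. apply H; lia. Qed.

Lemma cv_const c : Un_cv (fun _ => c) c.
Proof. intros eps He. exists 0%nat. intros. unfold R_dist. rewrite Rminus_diag, Rabs_R0; auto. Qed.

Lemma cv_edist n (a : nat -> vec) b : (forall k, (k < n)%nat -> Un_cv (fun j => a j k) (b k)) ->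
  Un_cv (fun j => edist n (a j) b) 0.
Proof. intros H. unfold edist, vnorm, dot. rewrite <- sqrt_0.
 apply (continuity_seq sqrt). apply continuity_pt_sqrt; lra.
 replace 0 with (sumR n (fun _ => 0)) by (rewrite sumR_const; ring).
 apply (cv_sumR n (fun j k => (a j k - b k) * (a j k - b k)) (fun _ => 0)).
 intros k Hk. replace 0 with ((b k - b k) * (b k - b k)) by ring.
 apply (CV_mult (fun j => a j k - b k) (fun j => a j k - b k)); apply (CV_minus _ (fun _ => b k)); auto; apply cv_const. Qed.

Lemma cv_coord n (a : nat -> vec) b k : (k < n)%nat -> Un_cv (fun j => edist n (a j) b) 0 -> Un_cv (fun j => a j k) (b k).
Proof. intros Hk H eps He. destruct (H eps He) as [N HN]. exists N. intros j Hj. specialize (HN j Hj).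
 unfold R_dist in *. rewrite Rminus_0_r in HN. pose proof (edist_coord n (a j) b k Hk).
 rewrite Rabs_pos_eq in HN by apply vnorm_nonneg. lra. Qed.

Section PartB.
Variables (m : nat) (Om : vec -> Prop) (rho : vec -> R) (G : vec -> vec).
Hypothesis HC1 : C1_grad m Om rho G.

Lemma phi_cv (y : nat -> vec) x : Om x -> (forall j, Om (y j)) -> Un_cv (fun j => edist (S m) (y j) x) 0 ->
  forall k, Un_cv (fun j => phi_map m rho G (y j) k) (phi_map m rho G x k).
Proof.
 intros Hx Hy Hcv.
 assert (Hrho : Un_cv (fun j => rho (y j)) (rho x)).
 { intros eps He. destruct (rho_cont m Om rho G HC1 x Hx eps He) as [d [Hd Hr]].
   destruct (Hcv d Hd) as [N HN]. exists N. intros j Hj. apply Hr; auto. specialize (HN j Hj).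
   unfold R_dist in HN. rewrite Rminus_0_r, Rabs_pos_eq in HN by apply vnorm_nonneg. auto. }
 assert (HG : Un_cv (fun j => edist (S m) (G (y j)) (G x)) 0).
 { destruct HC1 as [_ [_ H3]]. intros eps He. destruct (H3 x Hx eps He) as [d [Hd Hr]].
   destruct (Hcv d Hd) as [N HN]. exists N. intros j Hj. specialize (HN j Hj).
   unfold R_dist in *. rewrite Rminus_0_r, Rabs_pos_eq in HN by apply vnorm_nonneg.
   rewrite Rminus_0_r, Rabs_pos_eq by apply vnorm_nonneg. apply Hr; auto. }
 assert (Hnorm : Un_cv (fun j => vnorm (S m) (G (y j)) ^ 2) (vnorm (S m) (G x) ^ 2)).
 { replace (vnorm (S m) (G x) ^ 2) with (dot (S m) (G x) (G x)) by (rewrite <- vnorm_sq; ring).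
   apply (Un_cv_ext (fun j => dot (S m) (G (y j)) (G (y j)))). intros; rewrite <- vnorm_sq; ring.
   unfold dot. apply (cv_sumR (S m) (fun j k => G (y j) k * G (y j) k)). intros k Hk.
   apply (CV_mult (fun j => G (y j) k) (fun j => G (y j) k)); apply (cv_coord (S m) (fun j => G (y j)) (G x) k); auto. }
 assert (Hexp : forall a (u : nat -> R) l, Un_cv u l -> Un_cv (fun j => exp (a * u j)) (exp (a * l))).
 { intros a u l Hu. apply (continuity_seq (fun t => exp (a * t))). 
   apply (continuity_pt_comp (fun t => a * t) exp). apply continuity_pt_scal. apply derivable_continuous_pt, derivable_pt_id.
   apply derivable_continuous_pt, derivable_pt_exp. auto. }
 assert (Hc : Un_cv (fun j => exp (rho (y j)) / 2 * (1 + exp (-2 * rho (y j)) * (1 + vnorm (S m) (G (y j)) ^ 2)))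
              (exp (rho x) / 2 * (1 + exp (-2 * rho x) * (1 + vnorm (S m) (G x) ^ 2)))).
 { apply (CV_mult (fun j => exp (rho (y j)) / 2)).
   unfold Rdiv. apply (CV_mult (fun j => exp (rho (y j)))). 
   apply (Un_cv_ext (fun j => exp (1 * rho (y j)))). intros; rewrite Rmult_1_l; auto.
   replace (exp (rho x)) with (exp (1 * rho x)) by (rewrite Rmult_1_l; auto). apply Hexp; auto. apply cv_const.
   apply (CV_plus (fun _ => 1)). apply cv_const.
   apply (CV_mult (fun j => exp (-2 * rho (y j)))). apply Hexp; auto.
   apply (CV_plus (fun _ => 1)). apply cv_const. auto. }
 intros k. destruct k as [|i].
 - exact Hc.
 - unfold phi_map. destruct (Nat.leb i m) eqn:Hi.
   + apply Nat.leb_le in Hi.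
     assert (Hyi : Un_cv (fun j => y j i) (x i)) by (apply (cv_coord (S m) y x i); auto; lia).
     assert (HGi : Un_cv (fun j => G (y j) i) (G x i)) by (apply (cv_coord (S m) (fun j => G (y j)) (G x) i); auto; lia).
     apply (CV_plus (fun j => _ * y j i) (fun j => exp (- rho (y j)) * (- y j i + G (y j) i))).
     apply (CV_mult _ (fun j => y j i)); auto.
     apply (CV_mult (fun j => exp (- rho (y j)))).
     apply (Un_cv_ext (fun j => exp (-1 * rho (y j)))). intros; f_equal; ring.
     replace (- rho x) with (-1 * rho x) by ring. apply Hexp; auto.
     apply (CV_plus (fun j => - y j i)). 
     apply (Un_cv_ext (fun j => 0 - y j i)). intros; ring. replace (- x i) with (0 - x i) by ring.
     apply (CV_minus (fun _ => 0)); auto; apply cv_const. auto.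
   + apply cv_const.
Qed.
End PartB.

Definition closedV (n : nat) (A : vec -> Prop) : Prop :=
  forall x, inE n x -> (forall eps, (0 < eps)%R -> exists y, A y /\ (edist n x y < eps)%R) -> A x.
Module HBM.
From mathcomp Require Import all_boot all_algebra.
From mathcomp Require Import all_classical all_reals all_analysis Rstruct Rstruct_topology.
Import Num.Def Num.Theory GRing.Theory.
Import numFieldNormedType.Exports.
Local Open Scope classical_set_scope.
Local Open Scope ring_scope.

Definition toV n (r : 'rV[R]_n) : vec := fun k =>
  match (insub k : option 'I_n) with Some i => r ord0 i | None => 0 end.
Arguments toV {n}.

Lemma toV_lt {n} (r : 'rV[R]_n) (i : 'I_n) : toV r i = r ord0 i.
Proof. by rewrite /toV valK. Qed.

Lemma toV_ge {n} (r : 'rV[R]_n) k : (n <= k)%N -> toV r k = 0.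
Proof. by move=> h; rewrite /toV insubF // ltnNge h. Qed.

Lemma toV_inE {n} (r : 'rV[R]_n) : Defs.inE n (toV r).
Proof. by move=> k /leP h; apply: toV_ge. Qed.

Definition fromV n (v : vec) : 'rV[R]_n := \row_(i < n) v i.

Lemma toV_fromV n v : Defs.inE n v -> toV (fromV n v) = v.
Proof.
move=> hv; apply: functional_extensionality_dep => k.
case: (ltnP k n) => hk.
  by rewrite (toV_lt (fromV n v) (Ordinal hk)) mxE.
by rewrite toV_ge // hv //; apply/leP.
Qed.

Lemma ball_toV {n} (r r' : 'rV[R]_n) e : ball r e r' ->
  forall k, (k < n)%N -> Rlt (Rabs (Rminus (toV r k) (toV r' k))) e.
Proof.
rewrite /ball /= /mx_ball => -[_ hb] k hk; have := hb ord0 (Ordinal hk).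
rewrite /ball /= -(toV_lt r) -(toV_lt r') /=.
by move/RltP.
Qed.

Lemma ball_edist {n} (r r' : 'rV[R]_n) e : Rlt 0 e -> ball r e r' ->
  Rle (Defs.edist n (toV r) (toV r')) (Rmult (INR n) e).
Proof.
move=> e0 hb; apply: vnorm_small; first exact: Rlt_le.
move=> i /ltP hi; apply: Rlt_le; exact: ball_toV.
Qed.


Lemma in_seq_In (T : eqType) (s : seq T) x : x \in s -> List.In x s.
Proof.
elim: s => //= a s IH; rewrite in_cons => /orP [/eqP ->|h]; [by left|right; exact: IH].
Qed.

Lemma HB n (A : vec -> Prop) : (forall x, A x -> Defs.inE n x) ->
  (exists M, forall x, A x -> Rle (vnorm n x) M) -> closedV n A -> compact_set n A.
Proof.
move=> hin [M hM] hcl.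
pose B := [set r : 'rV[R]_n | A (toV r)].
pose C := [set v : 'rV[R]_n | forall i, `[(- (M + 1)), (M + 1)]%classic (v ord0 i)].
have cB : compact B.
  have clB : closed B.
    move=> r clr; change (A (toV r)); apply: (hcl (toV r) (toV_inE r)).
    move=> eps heps.
    have [he he2] := aux_div n eps heps.
    have [r' [Br' br']] := clr _ (nbhsx_ballx r _ (introT RltP he)).
    exists (toV r'); split => //.
    have hh := @ball_edist n r r' _ he br'. 
    exact: (Rle_lt_trans _ _ _ hh he2).
  have cC : compact C.
    rewrite /C; apply: (@rV_compact _ _ (fun=> `[(- (M + 1)), (M + 1)]%classic)) => i; exact: segment_compact.
  have sBC : B `<=` C.
    move=> r Br i /=; rewrite in_itv /=.
    have h1 := coord_le_vnorm n (toV r) i (elimT ltP (ltn_ord i)).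
    have h2 := hM _ Br. rewrite -(toV_lt r).
    have h3 := aux_between _ _ (Rle_trans _ _ _ h1 h2).
    by apply/andP; split; apply/RleP; case: h3.
  exact: (subclosed_compact clB cC sBC).
split => //.
move=> I U hop hcov.
pose J := {classic I}.
pose f := fun (i : J) => [set r : 'rV[R]_n | U i (toV r)].
rewrite compact_cover in cB.
have hopf : forall i, setT i -> open (f i).
  move=> i _; rewrite openE => r hr; apply/nbhs_ballP.
  have [eps [heps hU]] := hop i (toV r) hr.
  have [he he2] := aux_div n eps heps.
  exists (eps / (INR n + 1))%coqR; first exact/RltP.
  move=> r' br'; apply: (hU (toV r') (toV_inE r')).
  exact: (Rle_lt_trans _ _ _ (@ball_edist n r r' _ he br') he2).
have hcovf : B `<=` cover setT f.
  move=> r Br; have [i hi] := hcov _ Br; by exists i.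
have [D' _ hD'] := cB J setT f hopf hcovf.
exists (finmap.enum_fset D') => x Ax.
have Bx : B (fromV n x) by rewrite /B /= toV_fromV //; exact: hin.
have [i Di fi] := hD' _ Bx.
exists i; split; first exact: (@in_seq_In J _ _ Di).
by move: fi; rewrite /f /= toV_fromV //; exact: hin.
Qed.
End HBM.


Lemma list_max_ge (l : list nat) k : In k l -> (k <= fold_right max 0%nat l)%nat.
Proof. induction l; simpl; intros H. contradiction. destruct H. subst; lia. specialize (IHl H); lia. Qed.

Lemma compact_bound0 n K : compact_set (S n) K -> exists B, forall v, K v -> v 0%nat < B.
Proof. intros [Hin Hc].
 destruct (Hc nat (fun k v => v 0%nat < INR k)) as [l Hl].
 - intros k x Hx. exists (INR k - x 0%nat). split. lra. intros y Hy Hd.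
   pose proof (edist_coord (S n) x y 0 (Nat.lt_0_succ n)). pose proof (Rle_abs (y 0%nat - x 0%nat)). rewrite Rabs_minus_sym in H0. lra.
 - intros x _. destruct (nat_large (x 0%nat)) as [N HN]. exists N; auto.
 - exists (INR (fold_right max 0%nat l)). intros v Hv. destruct (Hl v Hv) as [k [Hk Hvk]].
   apply list_max_ge in Hk. apply le_INR in Hk. lra. Qed.

Lemma compact_closed n K v : compact_set n K -> inE n v -> ~ K v -> exists r, 0 < r /\ forall w, K w -> r <= edist n v w.
Proof. intros [Hin Hc] Hv HnK.
 destruct (Hc nat (fun k w => / (INR k + 1) < edist n v w)) as [l Hl].
 - intros k x Hx. exists (edist n v x - / (INR k + 1)). split. lra. intros y Hy Hd.
   pose proof (edist_triang n v y x). rewrite (edist_sym n y x) in H. lra.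
 - intros x Kx. assert (Hpos : 0 < edist n v x).
   { destruct (vnorm_nonneg n (fun i => v i - x i)) as [H|H]. auto. exfalso. apply HnK.
     replace v with x; auto. apply (vec_ext n). auto. auto. intros i Hi.
     pose proof (edist_coord n v x i Hi). unfold edist in H0. rewrite <- H in H0.
     pose proof (Rabs_pos (v i - x i)). destruct (Req_dec (x i) (v i)); auto.
     assert (Rabs (v i - x i) = 0) by lra. apply Rabs_no_R0 in H3. lra. lra. }
   destruct (nat_large (/ edist n v x)) as [N HN]. exists N.
   apply (Rmult_lt_reg_r (INR N + 1)). pose proof (pos_INR N); lra.
   rewrite Rinv_l by (pose proof (pos_INR N); lra).
   apply (Rmult_lt_compat_r (edist n v x)) in HN; auto. rewrite Rinv_l in HN by lra. nra.
 - set (N := fold_right max 0%nat l). exists (/ (INR N + 1)). split.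
   apply Rinv_0_lt_compat. pose proof (pos_INR N); lra.
   intros w Kw. destruct (Hl w Kw) as [k [Hk Hw]]. apply list_max_ge in Hk. apply le_INR in Hk.
   fold N in Hk. apply Rlt_le. eapply Rle_lt_trans; [|exact Hw].
   apply Rinv_le_contravar. pose proof (pos_INR k); lra. lra. Qed.

Lemma phi0 m rho G x : phi_map m rho G x 0%nat = exp (rho x) / 2 * (1 + exp (-2 * rho x) * (1 + vnorm (S m) (G x) ^ 2)).
Proof. reflexivity. Qed.

Lemma phi0_ge m rho G x : exp (rho x) / 2 <= phi_map m rho G x 0%nat.
Proof. rewrite phi0. assert (0 < exp (rho x)) by apply exp_pos. assert (0 < exp (-2 * rho x)) by apply exp_pos.
 assert (0 <= vnorm (S m) (G x) ^ 2) by apply pow2_ge_0.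
 assert (0 <= exp (rho x) / 2 * (exp (-2 * rho x) * (1 + vnorm (S m) (G x) ^ 2))).
 { apply Rmult_le_pos. lra. apply Rmult_le_pos; lra. } nra. Qed.

Lemma phi_inE m rho G x : inE (S (S m)) (phi_map m rho G x).
Proof. intros k Hk. destruct k. lia. unfold phi_map. destruct (Nat.leb k m) eqn:E; auto.
 apply Nat.leb_le in E. lia. Qed.

Theorem mainTheorem3 (m : nat) (Om : vec -> Prop) (rho : vec -> R) (G : vec -> vec) :
  sphere_domain m Om ->
  (exists x, sphere m x /\ ~ Om x) ->
  C1_grad m Om rho G ->
  complete_conformal m Om rho ->
  (exists sig : vec -> R,
     (forall x, Om x -> sig x = exp (- rho x)) /\
     (forall x, closure m Om x -> forall eps, 0 < eps -> exists delta, 0 < delta /\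
        forall y, closure m Om y -> edist (S m) y x < delta -> Rabs (sig y - sig x) < eps)) ->
  proper_map m Om (phi_map m rho G).
Proof.
 intros [Hop _] _ HC1 Hcpl [sig [Hs1 Hs2]] K HKh HKc.
 destruct (compact_bound0 (S m) K HKc) as [B HB].
 apply (HBM.HB (S m)).
 - intros x [Hx _]. apply inE_sphere, (proj1 Hop); auto.
 - exists 1. intros x [Hx _]. destruct (proj1 Hop x Hx) as [_ H]; lra.
 - intros x Hxin Happ.
   assert (HPb : forall y, Om y /\ K (phi_map m rho G y) -> exp (rho y) < 2 * B).
   { intros y [_ Hy]. specialize (HB _ Hy). pose proof (phi0_ge m rho G y). lra. }
   assert (HB0 : 0 < B).
   { destruct (Happ 1 Rlt_0_1) as [y [Hy _]]. specialize (HPb y Hy). pose proof (exp_pos (rho y)). lra. }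
   assert (Hcl : closure m Om x).
   { split; auto. intros eps He. destruct (Happ eps He) as [y [[Hy _] Hd]]. exists y; auto. }
   assert (Hsx : 0 < sig x).
   { destruct (Hs2 x Hcl (/ (4 * B))) as [d [Hd Hsd]]. apply Rinv_0_lt_compat; lra.
     destruct (Happ d Hd) as [y [Hy Hdy]].
     assert (Hcy : closure m Om y) by (apply (Om_closure m Om Hop); apply Hy).
     rewrite edist_sym in Hdy. specialize (Hsd y Hcy Hdy).
     rewrite Hs1 in Hsd by apply Hy. rewrite exp_Ropp in Hsd.
     specialize (HPb y Hy). pose proof (exp_pos (rho y)).
     assert (/ (2 * B) < / exp (rho y)) by (apply Rinv_lt_contravar; nra).
     apply Rabs_def2 in Hsd.
     assert (/ (4 * B) < / (2 * B)) by (apply Rinv_lt_contravar; nra).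
     assert (0 < / (4 * B)) by (apply Rinv_0_lt_compat; lra).
     replace (/ (2 * B)) with (2 * / (4 * B)) in H0 by (field; lra). lra. }
   assert (HOm : Om x).
   { apply NNPP. intros Hn. pose proof (boundary_sig m Om rho G sig Hop HC1 Hcpl Hs1 Hs2 x Hcl Hn). lra. }
   split; auto. apply NNPP. intros HnK.
   destruct (compact_closed _ K _ HKc (phi_inE m rho G x) HnK) as [r [Hr Hrw]].
   assert (Hpos : forall j : nat, 0 < / (INR j + 1)).
   { intros j. apply Rinv_0_lt_compat. pose proof (pos_INR j); lra. }
   set (y := fun j => proj1_sig (constructive_indefinite_description _ (Happ _ (Hpos j)))).
   assert (Hy : forall j, (Om (y j) /\ K (phi_map m rho G (y j))) /\ edist (S m) x (y j) < / (INR j + 1)).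
   { intros j. unfold y. destruct (constructive_indefinite_description _ _). simpl. auto. }
   assert (Hcv : Un_cv (fun j => edist (S m) (y j) x) 0).
   { intros eps He. destruct (nat_large (/ eps)) as [N HN]. exists N. intros j Hj.
     unfold R_dist. rewrite Rminus_0_r, Rabs_pos_eq by apply vnorm_nonneg.
     rewrite edist_sym. destruct (Hy j) as [_ Hd]. eapply Rlt_le_trans. exact Hd.
     apply le_INR in Hj. pose proof (pos_INR N).
     rewrite <- (Rinv_inv eps). apply Rinv_le_contravar. apply Rinv_0_lt_compat; auto. lra. }
   assert (Hphi : Un_cv (fun j => edist (S (S m)) (phi_map m rho G (y j)) (phi_map m rho G x)) 0).
   { apply (cv_edist (S (S m)) (fun j => phi_map m rho G (y j))). intros k _.
     apply (phi_cv m Om rho G HC1 y x HOm); auto. intros j; apply (Hy j). }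
   destruct (Hphi r Hr) as [N HN]. specialize (HN N (Nat.le_refl N)).
   unfold R_dist in HN. rewrite Rminus_0_r, Rabs_pos_eq in HN by apply vnorm_nonneg.
   specialize (Hrw _ (proj2 (proj1 (Hy N)))). rewrite edist_sym in Hrw. lra.
Qed.
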